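(* Let $\tau=\tau_1\ldots\tau_k\in\mathcal{S}_k$ and $0\le j\le k\le n$. The number of involutions $\pi\in\mathcal{S}_n$ that contain $\tau$ as a subsequence and that map exactly $j$ elements of $[k]$ into $[k]$ equals $\binom{n-k}{k-j}t_{n-2k+j}$ if either $j=0$ or the pattern of $\tau_1\ldots\tau_j$ is an involution in $\mathcal{S}_j$, and equals $0$ otherwise.
   Context: $[k]=\{1,\ldots,k\}$. $t_m$ denotes the number of involutions in $\mathcal{S}_m$ ($t_0=1$); when $k-j>n-k$ the binomial coefficient is $0$ and the term is $0$. A permutation $\pi=\pi_1\ldots\pi_n$ contains $\tau$ as a subsequence if there are indices $i_1<\cdots<i_k$ with $\pi_{i_r}=\tau_r$ for all $r$. The pattern of a word of $j$ distinct letters is the word obtained by the order-preserving relabeling of its letters by $[j]$. *)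

(* Defs.v *)
From mathcomp Require Import all_boot all_order all_fingroup.
Set Implicit Arguments. Unset Strict Implicit. Unset Printing Implicit Defensive.

(* Permutations of [n] are modelled by 'S_n = {perm 'I_n}, with values
   shifted to {0,...,n-1}.  The one-line word of s : 'S_n is
   s(0) s(1) ... s(n-1) (as a sequence of nats). *)
Definition perm_word (n : nat) (s : 'S_n) : seq nat :=
  [seq val (s i) | i <- enum 'I_n].

Definition is_involution (n : nat) (s : 'S_n) : bool := (s * s == 1)%g.

Definition t (m : nat) : nat := #|[set s : 'S_m | is_involution s]|.

Definition contains_subseq (n k : nat) (pi : 'S_n) (tau : 'S_k) : bool :=
  subseq (perm_word tau) (perm_word pi).

Definition nb_into (n k : nat) (pi : 'S_n) : nat :=
  #|[set i : 'I_n | (val i < k) && (val (pi i) < k)]|.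

(* pattern of a word of distinct letters: order-preserving relabelling
   by {0,...,size w - 1} (0-indexed version of [j]) *)
Definition pattern (w : seq nat) : seq nat :=
  [seq count (fun y => y < x) w | x <- w].

Definition word_involution (p : seq nat) : bool :=
  all (fun i => nth 0 p (nth 0 p i) == i) (iota 0 (size p)).

(* Main.v *)
Require Import Defs.
From mathcomp Require Import all_boot all_order all_fingroup.
From mathcomp Require Import zify.
Set Implicit Arguments. Unset Strict Implicit. Unset Printing Implicit Defensive.
Definition invol (T : finType) (s : {perm T}) := [forall x, s (s x) == x].

Lemma involP (T : finType) (s : {perm T}) : reflect (forall x, s (s x) = x) (invol s).
Proof. by apply: (iffP forallP) => H x; apply/eqP. Qed.

Section Pairing.
Variables (T : finType) (a b : seq T).
Hypotheses (ua : uniq a) (ub : uniq b) (sab : size a = size b).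

Definition pf (x : T) : T :=
  if x \in a then nth x b (index x a) else if x \in b then nth x a (index x b) else x.

Definition pD : {set T} := [set x | (x \in a) || (x \in b)].

Lemma pf_out x : x \notin pD -> pf x = x.
Proof. by rewrite /pf inE negb_or => /andP[/negbTE -> /negbTE ->]. Qed.

Lemma pf_in x : (pf x \in pD) = (x \in pD).
Proof.
rewrite /pf; case: ifP => xa.
  by rewrite !inE xa mem_nth ?orbT // -sab index_mem.
case: ifP => xb; last by rewrite !inE xa xb.
by rewrite !inE xa xb mem_nth ?sab ?index_mem.
Qed.

Lemma agree (p : {perm T}) : invol p -> map p a = b -> {in pD, p =1 pf}.
Proof.
move=> /involP ip mab x; rewrite inE /pf.
case: ifP => xa /= => [_|xb].
  by rewrite -mab (nth_map x) ?index_mem // nth_index.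
have ib : index x b < size a by rewrite sab index_mem.
have e : p (nth x a (index x b)) = x.
  by rewrite -(nth_map x x) // mab nth_index.
by rewrite xb -{1}e ip.
Qed.

Definition pcons := [forall x, pf (pf x) == x].

Lemma pconsP : reflect (involutive pf) pcons.
Proof. by apply: (iffP forallP) => H x; apply/eqP. Qed.

Lemma pcons_nec (p : {perm T}) : invol p -> map p a = b -> pcons.
Proof.
move=> ip mab; apply/pconsP => x.
have [xD|xD] := boolP (x \in pD); last by rewrite !pf_out ?pf_in.
have fD : pf x \in pD by rewrite pf_in.
by rewrite -(agree ip mab fD) -(agree ip mab xD); move/involP: ip.
Qed.

Lemma pair_count :
  #|[set p : {perm T} | invol p && (map p a == b)]| =
  if pcons then #|[set s : {perm T} | invol s && perm_on (~: pD) s]| else 0.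
Proof.
case: ifP => pc; last first.
  apply: eq_card0 => p; rewrite inE; apply/negP => /andP[ip /eqP mab].
  by rewrite (pcons_nec ip mab) in pc.
have fK : involutive pf by apply/pconsP.
pose p0 := perm (inv_inj fK).
have p0E x : p0 x = pf x by rewrite permE.
have p0i : invol p0 by apply/involP => x; rewrite !p0E fK.
have mab0 : map p0 a = b.
  case: (posnP (size a)) => [a0|apos].
    by rewrite (size0nil a0); apply/esym/size0nil; rewrite -sab.
  have [d _] : {x0 : T | true} by destruct a as [|y s]; [done|exists y].
  apply: (@eq_from_nth _ d); rewrite ?size_map //.
  move=> i ia; rewrite (nth_map d) // p0E /pf mem_nth //.
  by rewrite index_uniq // (set_nth_default d) // -sab.
have p0p0 : (p0 * p0 = 1)%g by apply/permP => x; rewrite permM perm1 !p0E fK.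
rewrite -[in RHS](card_imset _ (mulIg p0)); apply: eq_card => p.
rewrite inE; apply/idP/imsetP => [/andP[ip /eqP mab] | [s]].
  exists (p * p0)%g; last by rewrite -mulgA p0p0 mulg1.
  have ag := agree ip mab.
  have pD' x : x \notin pD -> p x \notin pD.
    move=> xD; apply: contra xD => pxD.
    by rewrite -{1}(involP _ ip x) ag // pf_in.
  have sE x : (p * p0)%g x = if x \in pD then x else p x.
    rewrite permM p0E; case: ifP => xD; first by rewrite ag ?fK.
    by rewrite pf_out // pD' ?xD.
  rewrite inE; apply/andP; split.
    apply/involP => x; have [xD|xD] := boolP (x \in pD).
      by rewrite (sE x) xD (sE x) xD.
    by rewrite (sE x) (negbTE xD) (sE (p x)) (negbTE (pD' _ xD)); move/involP: ip.
  apply/subsetP => x; rewrite inE sE in_setC; case: ifP => // _; by rewrite eqxx.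
rewrite inE => /andP[/involP iS on] ->.
have sD x : x \in pD -> s x = x by move=> xD; rewrite (out_perm on) // inE xD.
have sD' x : x \notin pD -> s x \notin pD.
  by move=> xD; rewrite -in_setC perm_closed // in_setC.
have pE x : (s * p0)%g x = if x \in pD then pf x else s x.
  rewrite permM p0E; case: ifP => xD; first by rewrite sD.
  by rewrite pf_out // sD' ?xD.
apply/andP; split.
  apply/involP => x; have [xD|xD] := boolP (x \in pD).
    by rewrite (pE x) xD pE pf_in xD fK.
  by rewrite (pE x) (negbTE xD) pE (negbTE (sD' _ xD)) iS.
rewrite -mab0; apply/eqP/eq_in_map => x xa; rewrite pE p0E inE xa //.
Qed.
End Pairing.
Lemma is_involutionE n (s : 'S_n) : is_involution s = invol s.
Proof.
apply/eqP/involP => [H x | H]; first by rewrite -permM H perm1.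
by apply/permP => x; rewrite permM H perm1.
Qed.

Section Transport.
Variables (T : finType) (R : {set T}).
Let U := {x : T | x \in R}.
Let m := #|{: U}|.

Definition Ff (s : 'S_m) (x : T) : T :=
  if insub x is Some u then val (enum_val (s (enum_rank (u : U)))) else x.

Lemma FfK s : cancel (Ff s) (Ff s^-1).
Proof.
move=> x; rewrite /Ff; case Rx: (x \in R); last by rewrite !insubF.
have -> : insub x = Some (Sub x Rx : U) by apply: insubT.
by rewrite /= valK enum_valK permK enum_rankK.
Qed.

Definition Fp (s : 'S_m) : {perm T} := perm (can_inj (FfK s)).

Lemma FpE s x : Fp s x = Ff s x.
Proof. by rewrite permE. Qed.

Lemma Fp_inj : injective Fp.
Proof.
move=> s1 s2 E; apply/permP => i.
have := congr1 (fun p : {perm T} => p (val (enum_val i))) E.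
rewrite !FpE /Ff valK /= enum_valK => /val_inj /enum_val_inj //.
Qed.

Lemma Fp_on s : perm_on R (Fp s).
Proof.
apply/subsetP => x; rewrite inE FpE /Ff; case: insubP => [//|_]; by rewrite eqxx.
Qed.

Lemma Fp_invol s : invol (Fp s) = is_involution s.
Proof.
rewrite is_involutionE; apply/involP/involP => H x.
  have := H (val (enum_val x)); rewrite !FpE /Ff valK /= enum_valK valK /= enum_valK.
  by move=> /val_inj /enum_val_inj.
rewrite !FpE /Ff; case Rx: (x \in R); last by rewrite !insubF.
have -> : insub x = Some (Sub x Rx : U) by apply: insubT.
by rewrite valK /= enum_valK H enum_rankK.
Qed.

Lemma card_inv_on : #|[set s : {perm T} | invol s && perm_on R s]| = t #|R|.
Proof.
rewrite /t -[#|R|](card_sig (fun x => x \in R)) -/U -/m.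
rewrite -(card_imset _ Fp_inj); apply: eq_card => p; rewrite !inE.
apply/idP/imsetP => [/andP[ip onp] | [s]]; last first.
  by rewrite inE => si ->; rewrite Fp_invol si Fp_on.
have cl x : (p x \in R) = (x \in R) by rewrite perm_closed.
pose g (i : 'I_m) : 'I_m := enum_rank (insubd (enum_val i) (p (val (enum_val i))) : U).
have gK : involutive g.
  move=> i; rewrite /g enum_rankK insubdK ?cl ?(valP (enum_val i)) //.
  by move/involP: ip => ->; rewrite valKd enum_valK.
exists (perm (inv_inj gK)).
  by rewrite inE is_involutionE; apply/involP => x; rewrite !permE gK.
apply/permP => x; rewrite FpE /Ff; case: insubP => [u Rx ux|Rx].
  by rewrite permE /g enum_rankK insubdK ?cl // enum_rankK ux.
apply/eqP; apply: contraNT Rx => H; have := subsetP onp x. rewrite inE H. by apply.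
Qed.
End Transport.
Section SortedSeq.
Variables (T : Type) (f : T -> nat) (k : nat).

Lemma sorted_all (x : T) s : sorted ltn (map f (x :: s)) ->
  sorted ltn (map f s) /\ all (fun y => f x < f y) s.
Proof.
move=> /= ps; split; first exact: path_sorted ps.
have := order_path_min ltn_trans ps; by rewrite all_map.
Qed.

Lemma sorted_prefix (s : seq T) (d : T) : sorted ltn (map f s) ->
  forall i, i < size s -> (f (nth d s i) < k) = (i < count (fun x => f x < k) s).
Proof.
elim: s => [//|x s IH] /sorted_all [ss al] i /=.
have c0 : k <= f x -> count (fun y => f y < k) s = 0.
  move=> fx; apply/eqP; rewrite -leqn0 leqNgt -has_count; rewrite -all_predC; apply: sub_all al => y /= h.
  by rewrite -leqNgt; apply: leq_trans fx (ltnW h).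
case: (ltnP (f x) k) => fx.
  case: i => [|i] //=; by rewrite ltnS => hi; rewrite add1n ltnS IH.
rewrite c0 //; case: i => [|i] /=; first by move=> _; apply/negbTE; rewrite -leqNgt.
by rewrite ltnS => hi; rewrite IH // c0.
Qed.

Lemma sorted_filter_take (s : seq T) : sorted ltn (map f s) ->
  [seq x <- s | f x < k] = take (count (fun x => f x < k) s) s.
Proof.
elim: s => [//|x s IH] /sorted_all [ss al] /=.
case: (ltnP (f x) k) => fx /=; first by rewrite IH.
have c0 : count (fun y => f y < k) s = 0.
  apply/eqP; rewrite -leqn0 leqNgt -has_count -all_predC; apply: sub_all al => y /= h.
  by rewrite -leqNgt; apply: leq_trans fx (ltnW h).
by rewrite c0 addn0 /=; apply: size0nil; rewrite size_filter c0.
Qed.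
End SortedSeq.

Lemma sorted_count_index (v : seq nat) x : sorted ltn v -> x \in v ->
  count (fun y => y < x) v = index x v.
Proof.
elim: v => [//|y v IH] ps; have := @sorted_all _ id y v; rewrite !map_id => /(_ ps) [ss al].
rewrite inE /=; case: eqVneq => [->|ne] /= xv.
  rewrite ltnn add0n; apply/eqP; rewrite -leqn0 leqNgt -has_count.
  by apply/hasPn => z zv; rewrite -leqNgt ltnW //; move/allP: al => /(_ z zv).
rewrite IH // ; have : y < x by move/allP: al => /(_ x xv).
by move=> ->.
Qed.
Lemma pconsE (T : finType) (a b : seq T) (d : T) : uniq a -> uniq b -> size a = size b ->
  pcons a b <-> (forall i i', i < size a -> i' < size a ->
                   nth d a i' = nth d b i -> nth d b i' = nth d a i).
Proof.
move=> ua ub sab.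
have pfa i : i < size a -> pf a b (nth d a i) = nth d b i.
  move=> ia; rewrite /pf mem_nth // index_uniq //.
  by apply: set_nth_default; rewrite -sab.
split.
  move/pconsP => H i i' ia ia' e.
  have := H (nth d a i); rewrite pfa // -e pfa //.
move=> H; apply/pconsP => x.
have [xa|xa] := boolP (x \in a).
  have ia : index x a < size a by rewrite index_mem.
  have ex : nth d a (index x a) = x by rewrite nth_index.
  rewrite -{1}ex pfa //.
  have [ya|ya] := boolP (nth d b (index x a) \in a).
    have ia' : index (nth d b (index x a)) a < size a by rewrite index_mem.
    have ey : nth d a (index (nth d b (index x a)) a) = nth d b (index x a) by rewrite nth_index.
    rewrite -{1}ey pfa // (H _ _ ia ia' ey) ex //.
  have yb : nth d b (index x a) \in b by rewrite mem_nth // -sab.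
  rewrite /pf (negbTE ya) yb index_uniq -?sab // (set_nth_default d) //.
have [xb|xb] := boolP (x \in b); last by rewrite /pf (negbTE xa) (negbTE xb) (negbTE xa) (negbTE xb).
have ib : index x b < size a by rewrite sab index_mem.
have -> : pf a b x = nth d a (index x b).
  by rewrite /pf (negbTE xa) xb (set_nth_default d).
by rewrite pfa // nth_index.
Qed.

Lemma word_inv_pattern (U V : seq nat) : uniq U -> sorted ltn V -> perm_eq U V ->
  word_involution (pattern U) <-> (forall i i', i < size U -> i' < size U ->
     nth 0 U i' = nth 0 V i -> nth 0 V i' = nth 0 U i).
Proof.
move=> uU sV pUV.
have sz : size V = size U by rewrite (perm_size pUV).
have memUV x : (x \in U) = (x \in V) by apply: perm_mem.
have uV : uniq V by rewrite -(perm_uniq pUV).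
have pE : pattern U = [seq index x V | x <- U].
  apply/eq_in_map => x xU; by rewrite (seq.permP pUV) sorted_count_index // -memUV.
have P i : i < size U -> nth 0 (pattern U) i = index (nth 0 U i) V.
  by move=> iU; rewrite pE (nth_map 0).
have Pl i : i < size U -> index (nth 0 U i) V < size U.
  by move=> iU; rewrite -sz index_mem -memUV mem_nth.
have szP : size (pattern U) = size U by rewrite pE size_map.
rewrite /word_involution szP; split.
  move/allP => W i i' iU iU' e.
  have := W i'; rewrite mem_iota add0n iU' => /(_ isT) /eqP.
  rewrite (P _ iU') e index_uniq ?sz // (P _ iU) => e2.
  by rewrite -e2 nth_index // -memUV mem_nth.
move=> H; apply/allP => i; rewrite mem_iota add0n => /= iU.
rewrite (P _ iU) (P _ (Pl _ iU)).
have e : nth 0 U i = nth 0 V (index (nth 0 U i) V) by rewrite nth_index // -memUV mem_nth.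
by rewrite -(H _ _ (Pl _ iU) iU e) index_uniq ?sz.
Qed.
Section Main.
Variables (n k j : nat) (tau : 'S_k).
Hypotheses (hjk : j <= k) (hkn : k <= n).

Definition Tw : seq 'I_n := [seq widen_ord hkn (tau i) | i <- enum 'I_k].
Definition L : {set 'I_n} := [set i : 'I_n | i < k].
Definition Qp (p : 'S_n) : {set 'I_n} := [set i | p i < k].
Definition A : {set 'I_n} := [set x in take j Tw].

Lemma mem_Tw y : (y \in Tw) = (y < k).
Proof.
apply/mapP/idP => [[i _ ->] | yk]; first by rewrite /= ltn_ord.
by exists (tau^-1 (Ordinal yk))%g; rewrite ?mem_enum // permKV; apply: val_inj.
Qed.

Lemma uniq_Tw : uniq Tw.
Proof.
rewrite map_inj_uniq ?enum_uniq // => x y /(congr1 val) /= /val_inj; exact: perm_inj.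
Qed.

Lemma size_Tw : size Tw = k.
Proof. by rewrite size_map size_enum_ord. Qed.

Lemma val_Tw : map val Tw = perm_word tau.
Proof. by rewrite /perm_word -map_comp. Qed.

Lemma card_L : #|L| = k.
Proof.
rewrite -size_Tw -(card_uniqP uniq_Tw); apply: eq_card => x; by rewrite inE mem_Tw.
Qed.

Lemma card_A : #|A| = j.
Proof.
by rewrite cardsE (card_uniqP _) ?take_uniq ?uniq_Tw // size_take size_Tw; case: ltngtP hjk.
Qed.

Lemma A_sub x : x \in A -> x \in L.
Proof. by rewrite !inE -mem_Tw => /mem_take. Qed.

Lemma nb_intoE p : nb_into k p = #|L :&: Qp p|.
Proof. by apply: eq_card => i; rewrite !inE. Qed.

Lemma enumQp p : enum (Qp p) = [seq i <- enum 'I_n | p i < k].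
Proof. by rewrite enumT /enum_mem; apply: eq_filter => i; rewrite !inE. Qed.

Lemma containsE p : invol p -> contains_subseq p tau = (map p Tw == enum (Qp p)).
Proof.
move=> /involP ip; rewrite /contains_subseq.
have U : uniq (perm_word p).
  rewrite map_inj_uniq ?enum_uniq // => x y /val_inj; exact: perm_inj.
have F : [seq x <- perm_word p | x \in perm_word tau] = map val (map p (enum (Qp p))).
  rewrite filter_map enumQp -map_comp; congr map; apply: eq_filter => i /=.
  by rewrite -val_Tw (mem_map val_inj) mem_Tw.
apply/(subseq_uniqP U)/eqP; rewrite F -val_Tw => H.
  have H' := inj_map val_inj H.
  by rewrite H' -map_comp (eq_map ip) map_id.
by rewrite -H -map_comp (eq_map ip) map_id.
Qed.

Lemma QpE p (Q : {set 'I_n}) : invol p -> map p Tw = enum Q -> Qp p = Q.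
Proof.
move=> ip m; apply/setP => x; rewrite inE -mem_enum -m.
by rewrite -{2}(involP _ ip x) mem_map ?mem_Tw //; exact: perm_inj.
Qed.


Definition Pset (p : 'S_n) := [&& is_involution p, contains_subseq p tau & nb_into k p == j].

Lemma fiber (Q : {set 'I_n}) :
  #|[set p | Pset p && (Qp p == Q)]| =
  if #|L :&: Q| == j then #|[set p : 'S_n | invol p && (map p Tw == enum Q)]| else 0.
Proof.
case: ifP => hQ.
  apply: eq_card => p; rewrite !inE /Pset is_involutionE.
  case ip: (invol p) => //=; rewrite containsE // nb_intoE.
  apply/idP/idP => [/andP[/andP[/eqP c _] /eqP q] | /eqP m].
    by rewrite -q c.
  by rewrite (QpE ip m) m hQ !eqxx.
apply: eq_card0 => p; rewrite !inE /Pset nb_intoE.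
by apply/negP => /andP[/and3P[_ _ /eqP h] /eqP q]; rewrite -q h eqxx in hQ.
Qed.

Lemma pD_LQ (Q : {set 'I_n}) : pD Tw (enum Q) = L :|: Q.
Proof. by apply/setP => x; rewrite !inE mem_Tw mem_enum. Qed.

Lemma NQ (Q : {set 'I_n}) :
  #|[set p : 'S_n | invol p && (map p Tw == enum Q)]| =
  if (#|Q| == k) && pcons Tw (enum Q) then t (n - #|L :|: Q|) else 0.
Proof.
case: (eqVneq #|Q| k) => hQ /=.
  rewrite pair_count ?uniq_Tw ?enum_uniq // ?size_Tw -?cardE ?hQ //.
  case: ifP => // _; rewrite card_inv_on pD_LQ; congr t.
  have := cardsC (L :|: Q); rewrite card_ord; set a := #|~: _|; set b := #|_ :|: _|; lia.
apply: eq_card0 => p; rewrite inE; apply/negP => /andP[_ /eqP m].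
by move: hQ; rewrite cardE -m size_map size_Tw eqxx.
Qed.

Definition condQ (Q : {set 'I_n}) := [&& #|L :&: Q| == j, #|Q| == k & pcons Tw (enum Q)].

Lemma count_step :
  #|[set p | Pset p]| = #|[set Q | condQ Q]| * t (n + j - 2 * k).
Proof.
rewrite -sum1dep_card (partition_big Qp predT) //=.
rewrite -sum_nat_const (big_mkcond (fun Q => Q \in [set Q | condQ Q])) /=.
apply: eq_bigr => Q _; rewrite sum1dep_card fiber NQ inE /condQ.
case: (eqVneq #|L :&: Q| j) => //= hj; case: (eqVneq #|Q| k) => //= hq.
case: ifP => // _; congr t.
have := cardsU L Q; rewrite card_L hq hj.
have := subset_leq_card (subsetIl L Q); rewrite hj card_L.
set b := #|_ :|: _|; lia.
Qed.

Lemma enumLQ (Q : {set 'I_n}) : enum (L :&: Q) = [seq x <- enum Q | val x < k].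
Proof.
rewrite /enum_mem -filter_predI; apply: eq_filter => x; by rewrite /= !inE andbC.
Qed.

Lemma count_LQ (Q : {set 'I_n}) : count (fun x : 'I_n => val x < k) (enum Q) = #|L :&: Q|.
Proof. by rewrite cardE enumLQ size_filter. Qed.

Lemma sorted_enum (Q : {set 'I_n}) : sorted ltn (map val (enum Q)).
Proof.
rewrite -[enum _](eq_filter (mem_enum _)).
rewrite -(eq_filter (mem_map val_inj _)) -filter_map.
by rewrite (sorted_filter ltn_trans) // unlock val_ord_enum iota_ltn_sorted.
Qed.

Lemma take_enum (Q : {set 'I_n}) : #|L :&: Q| = j -> take j (enum Q) = enum (L :&: Q).
Proof.
move=> h; rewrite enumLQ (sorted_filter_take (f := val)) ?sorted_enum //.
by rewrite count_LQ h.
Qed.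

Lemma card_condQ0 : n = 0 -> #|[set Q | condQ Q]| =
  if word_involution (pattern (take j (perm_word tau))) then 'C(n - k, k - j) else 0.
Proof.
move=> n0; have k0 : k = 0 by lia.
have j0 : j = 0 by lia.
rewrite j0 take0 /= k0 bin0.
have c0 (Q : {set 'I_n}) : #|Q| = 0.
  have := max_card (mem Q); rewrite card_ord => h.
  set c := #|_| in h *; lia.
apply: (eq_card1 (x := set0)) => Q; rewrite !inE /condQ c0 (cards0_eq (c0 Q)) cards0 j0 k0 !eqxx /=.
apply/forallP => x; have := ltn_ord x; by rewrite {2}n0.
Qed.

Variable d : 'I_n.

Lemma K1 (Q : {set 'I_n}) : #|L :&: Q| = j -> forall i, i < #|Q| ->
  (nth d (enum Q) i < k) = (i < j).
Proof.
move=> h i iQ; rewrite (sorted_prefix (f := val)) ?sorted_enum ?count_LQ ?h //.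
by rewrite -cardE.
Qed.

Lemma K2 i : i < k -> (nth d Tw i \in A) = (i < j).
Proof.
move=> ik; rewrite inE in_take ?mem_nth ?size_Tw // index_uniq ?size_Tw ?uniq_Tw //.
Qed.

Lemma Tw_lt i : i < k -> nth d Tw i < k.
Proof. by move=> ik; rewrite -mem_Tw mem_nth ?size_Tw. Qed.

Lemma consQ (Q : {set 'I_n}) : #|Q| = k -> #|L :&: Q| = j ->
  pcons Tw (enum Q) = (L :&: Q == A) && pcons (take j Tw) (enum A).
Proof.
move=> hq hj.
have sE : size (enum Q) = k by rewrite -cardE.
have szt : size (take j Tw) = j by rewrite size_take size_Tw; case: ltngtP hjk.
have szA : size (enum A) = j by rewrite -cardE card_A.
have P1 := pconsE d uniq_Tw (enum_uniq (mem Q)) (etrans size_Tw (esym sE)).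
have P2 := pconsE d (take_uniq j uniq_Tw) (enum_uniq (mem A)) (etrans szt (esym szA)).
rewrite size_Tw in P1; rewrite szt in P2.
have k1 := K1 hj; rewrite hq in k1.
apply/idP/idP.
  move/P1 => H.
  have sub : L :&: Q \subset A.
    apply/subsetP => x xLQ.
    have xQ : x \in enum Q by rewrite mem_enum; move: xLQ; rewrite inE => /andP[].
    have xL : x < k by move: xLQ; rewrite !inE => /andP[].
    have xa : x \in Tw by rewrite mem_Tw.
    have iQ : index x (enum Q) < k by rewrite -sE index_mem.
    have ia : index x Tw < k by rewrite -size_Tw index_mem.
    have e : nth d Tw (index x Tw) = nth d (enum Q) (index x (enum Q)) by rewrite !nth_index.
    have e2 := H _ _ iQ ia e.
    have : index x Tw < j by rewrite -(k1 _ ia) e2 Tw_lt.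
    by rewrite -K2 // nth_index.
  have eqA : L :&: Q == A by rewrite eqEcard sub card_A hj leqnn.
  rewrite eqA /=; apply/P2 => i i' ij ij'.
  rewrite -(eqP eqA) -take_enum // !nth_take //; apply: H; exact: leq_trans hjk.
move=> /andP[/eqP eqA /P2 H]; apply/P1 => i i' ik ik' e.
have ij : i < j by rewrite -k1 // -e Tw_lt.
have ij' : i' < j.
  rewrite -K2 // e -eqA inE; apply/andP; split; first by rewrite inE k1.
  by rewrite -mem_enum mem_nth ?sE.
rewrite -eqA -take_enum // in H.
have := H i i' ij ij'; rewrite !nth_take //; by apply.
Qed.

Lemma consW : pcons (take j Tw) (enum A) = word_involution (pattern (take j (perm_word tau))).
Proof.
have szt : size (take j Tw) = j by rewrite size_take size_Tw; case: ltngtP hjk.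
have szA : size (enum A) = j by rewrite -cardE card_A.
have P2 := pconsE d (take_uniq j uniq_Tw) (enum_uniq (mem A)) (etrans szt (esym szA)).
rewrite szt in P2.
have pe : perm_eq (take j Tw) (enum A).
  apply: uniq_perm; rewrite ?take_uniq ?uniq_Tw ?enum_uniq // => x.
  by rewrite mem_enum inE.
have U1 : uniq (take j (perm_word tau)).
  by rewrite -val_Tw -map_take (map_inj_uniq val_inj) take_uniq ?uniq_Tw.
have U3 : perm_eq (take j (perm_word tau)) (map val (enum A)).
  by rewrite -val_Tw -map_take perm_map.
have W := word_inv_pattern U1 (sorted_enum A) U3.
have szw : size (take j (perm_word tau)) = j by rewrite -val_Tw -map_take size_map.
rewrite szw in W.
have n1 i : i < j -> nth 0 (take j (perm_word tau)) i = val (nth d (take j Tw) i).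
  by move=> ij; rewrite -val_Tw -map_take (nth_map d) ?szt.
have n2 i : i < j -> nth 0 (map val (enum A)) i = val (nth d (enum A) i).
  by move=> ij; rewrite (nth_map d) ?szA.
apply/idP/idP => [/P2 H | /W H]; [apply/W | apply/P2] => i i' ij ij' e.
  rewrite n1 // n2 // in e; rewrite n1 // n2 //; congr val; apply: H => //.
  exact: val_inj.
apply: val_inj; rewrite -n1 // -n2 //; apply: H => //; by rewrite n1 // n2 // e.
Qed.


Lemma card_QA : #|[set Q : {set 'I_n} | (L :&: Q == A) && (#|Q| == k)]| = 'C(n - k, k - j).
Proof.
have cL : #|~: L| = n - k.
  by have := cardsC L; rewrite card_L card_ord; set a := #|~: L|; lia.
rewrite -cL -cards_draws -[in RHS](card_in_imset (f := fun S => A :|: S)); last first.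
  move=> S1 S2; rewrite !inE => /andP[s1 _] /andP[s2 _] e.
  apply/setP => x; have := congr1 (fun X : {set 'I_n} => x \in X) e; rewrite /= !in_setU.
  case xL : (x \in L).
    have /negbTE -> : x \notin S1 by apply: contraL xL => /(subsetP s1); rewrite inE.
    by have /negbTE -> : x \notin S2 by apply: contraL xL => /(subsetP s2); rewrite inE.
  have /negbTE -> // : x \notin A by apply: contraFN xL; apply: A_sub.
apply: eq_card => Q; rewrite inE; apply/andP/imsetP => [[/eqP eA /eqP cQ] | [S]].
  exists (Q :\: L).
    rewrite inE subsetDr /=; have := cardsID L Q; rewrite setIC eA card_A cQ => <-.
    by rewrite addKn.
  by rewrite -eA setIC setID.
rewrite inE => /andP[sS /eqP cS] ->.
have dis x : x \in S -> x \notin L by move/(subsetP sS); rewrite inE.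
have I0 : L :&: (A :|: S) = A.
  apply/setP => x; rewrite in_setI in_setU; case xA: (x \in A) => /=.
    by rewrite andbT A_sub.
  case xS: (x \in S); last by rewrite andbF.
  by rewrite andbT; apply/negbTE/dis.
split; first by rewrite I0.
rewrite cardsU cS card_A.
have -> : A :&: S = set0.
  apply/setP => x; rewrite in_setI in_set0; apply/negP => /andP[/A_sub xL /dis]; by rewrite xL.
by rewrite cards0 subn0 subnKC.
Qed.

Lemma card_condQ : #|[set Q | condQ Q]| =
  if word_involution (pattern (take j (perm_word tau))) then 'C(n - k, k - j) else 0.
Proof.
case: ifP => hW.
  rewrite -card_QA; apply: eq_card => Q; rewrite !inE /condQ.
  apply/idP/idP => [/and3P[/eqP hj /eqP hq c] | /andP[/eqP eA /eqP hq]].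
    by rewrite consQ // in c; case/andP: c => -> _; rewrite hq eqxx.
  have hj : #|L :&: Q| = j by rewrite eA card_A.
  by rewrite hj hq !eqxx consQ // eA eqxx consW hW.
apply: eq_card0 => Q; rewrite inE /condQ; apply/negP => /and3P[/eqP hj /eqP hq].
by rewrite consQ // consW hW andbF.
Qed.

End Main.
Theorem mainTheorem2 (n k j : nat) (tau : 'S_k) :
  j <= k -> k <= n ->
  #|[set pi : 'S_n | [&& is_involution pi, contains_subseq pi tau
                        & nb_into k pi == j]]|
  = if (j == 0) || word_involution (pattern (take j (perm_word tau)))
    then 'C(n - k, k - j) * t (n + j - 2 * k)
    else 0.
Proof.
move=> hjk hkn.
have -> : (j == 0) || word_involution (pattern (take j (perm_word tau))) =
          word_involution (pattern (take j (perm_word tau))).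
  by case: eqP => //= ->; rewrite take0.
have := count_step tau hjk hkn; rewrite /Pset => ->.
have -> : #|[set Q | condQ j tau hkn Q]| = if word_involution (pattern (take j (perm_word tau))) then 'C(n - k, k - j) else 0.
  case: (posnP n) => [n0|np]; first exact: card_condQ0.
  exact: (card_condQ tau hjk hkn (Ordinal np)).
by case: ifP.
Qed.
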